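(* Let $\Sigma=(\mathbf{x},\mathbf{F})$ be an LP seed of rank $n\ge2$ satisfying Condition 1.2. Let $y=\sum_{m=a}^{b}c_mx_1^m$ with $a\le b$ integers, $c_m\in R^{st}[x_2,x'_2,\dots,x_n,x'_n]$ and $c_a\ne0$. Then $LT(y)=\varphi(c_a)\,x_1^a$.
   Context: $R$ is a unique factorization domain containing $\mathbb{Z}$ and $\mathcal{F}$ is the field of rational functions in $n$ variables over $\mathrm{Frac}(R)$. An LP seed of rank $n$ is a pair $(\mathbf{x},\mathbf{F})$ where $\mathbf{x}=\{x_1,\dots,x_n\}$ is a transcendence basis of $\mathcal{F}$ over $\mathrm{Frac}(R)$ and $\mathbf{F}=\{F_1,\dots,F_n\}$ are irreducible polynomials in $R[x_1,\dots,x_n]$ with $x_j\nmid F_i$ for all $i,j$ and $F_i$ not involving $x_i$. The exchange Laurent polynomial is $\hat F_j=F_j/\prod_{k\neq j}x_k^{a_k}$, with $a_k\in\mathbb{Z}_{\ge0}$ maximal such that $F_k^{a_k}$ divides $F_j|_{x_k\leftarrow F_k/x'_k}$ in $R[x_1,\dots,x_{k-1},(x'_k)^{-1},x_{k+1},\dots,x_n]$. Set $x'_j=\hat F_j/x_j$. Lexicographic order on $\mathbb{Z}^n$: $\mathbf{a}\prec\mathbf{a}'$ if the first nonzero entry of $\mathbf{a}'-\mathbf{a}$ is positive; the lexicographically first monomial of a polynomial is its term with $\prec$-smallest exponent vector. Condition 1.2: for every $k\in[1,n]$, with $M_k$ the lexicographically first monomial of $F_k$: (i) $\hat F_k=F_k$;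 (ii) $M_k=x_{k+1}^{v_{k+1,k}}\cdots x_n^{v_{n,k}}$ (coefficient $1$) with $v_{\cdot,k}\in\mathbb{Z}_{\ge0}$ for $k\in[1,n-1]$, and $M_n=1$; (iii) if $k\ne1$ and $F_k$ involves $x_1$, then every monomial of $F_k-M_k$ is divisible by $x_1$; (iv) if $k\notin\{1,2\}$, $F_k$ does not involve $x_1$, and there is $i\in[2,k-1]$ such that $x_k$ divides $M_i$, then every monomial of $F_k-M_k$ is divisible by $x_i$. Under (i), $R[x_2,x'_2,\dots,x_n,x'_n]\subseteq R[x_1,x_2^{\pm1},\dots,x_n^{\pm1}]$; $\varphi$ is the restriction to $R[x_2,x'_2,\dots,x_n,x'_n]$ of the $R$-algebra homomorphism $R[x_1,x_2^{\pm1},\dots,x_n^{\pm1}]\to R[x_2^{\pm1},\dots,x_n^{\pm1}]$ with $x_1\mapsto0$, $x_i^{\pm1}\mapsto x_i^{\pm1}$ ($i\ge2$). $R^{st}[x_2,x'_2,\dots,x_n,x'_n]$ is the $R$-span of the monomials in $x_2,x'_2,\dots,x_n,x'_n$ containing no product $x_ix'_i$. For $y\in R[x_1^{\pm1},\dots,x_n^{\pm1}]$, $LT(y)$ is the sum of all terms (with nonzero coefficient) of the Laurent expansion of $y$ in $x_1,\dots,x_n$ having the smallest power of $x_1$. *)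

(* Defs.v *)
From HB Require Import structures.
From mathcomp Require Import all_boot all_order all_algebra.
From mathcomp Require Import fraction.
From mathcomp.multinomials Require Import mpoly.

Set Implicit Arguments.
Unset Strict Implicit.
Unset Printing Implicit Defensive.

Import Order.TTheory GRing.Theory Num.Theory.
Local Open Scope ring_scope.

Notation "x %:F" := (@FracField.tofrac _ x) : ring_scope.

Definition rdvd (T : comNzRingType) (a b : T) : Prop := exists q, b = q * a.

Definition irreducible_elt (T : comUnitRingType) (p : T) : Prop :=
  p != 0 /\ ~~ (p \is a GRing.unit) /\
  forall a b : T, p = a * b -> a \is a GRing.unit \/ b \is a GRing.unit.

Definition prime_elt (T : comUnitRingType) (p : T) : Prop :=
  p != 0 /\ ~~ (p \is a GRing.unit) /\
  forall a b : T, rdvd p (a * b) -> rdvd p a \/ rdvd p b.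

(* Unique factorization domain: every nonzero nonunit is a finite product
   of irreducibles, and irreducibles are prime (standard equivalent form of
   existence + uniqueness of factorizations). *)
Definition is_UFD (R : idomainType) : Prop :=
  (forall r : R, r != 0 -> ~~ (r \is a GRing.unit) ->
     exists s : seq R, (forall x, x \in s -> irreducible_elt x) /\
                       r = \prod_(x <- s) x) /\
  (forall r : R, irreducible_elt r -> prime_elt r).

(* R contains Z, i.e. the canonical map Z -> R is injective: char R = 0. *)
Definition contains_Z (R : idomainType) : Prop := [pchar R] =i pred0.

Section LP.
Variables (R : idomainType) (n : nat).

Local Notation P := {mpoly R[n]}.
Local Notation K := {fraction P}.

(* the variable x_i (0-based index i; the paper's x_1 is index 0) *)
Definition xv (i : 'I_n) : P := 'X_i.
Definition xK (i : 'I_n) : K := (xv i)%:F.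

Definition involves (p : P) (i : 'I_n) : Prop :=
  exists2 m, m \in msupp p & (0 < m i)%N.

(* LP seed (x, F) with x the standard variables: each F_i is irreducible,
   no x_j divides F_i, and F_i does not involve x_i. *)
Definition LP_seed (F : 'I_n -> P) : Prop :=
  forall i, irreducible_elt (F i) /\ (forall j, ~ rdvd (xv j) (F i)) /\
            ~ involves (F i) i.

(* F_j |_{x_k <- F_k / x'_k}, viewed in R[x_1,..,x_{k-1},(x'_k)^{-1},x_{k+1},..,x_n],
   where the variable x_k is reused as the name of (x'_k)^{-1}. *)
Definition subst_exch (F : 'I_n -> P) (j k : 'I_n) : P :=
  F j \mPo [tuple (if i == k then F k * 'X_i else 'X_i) | i < n].

Definition maxpow (a : nat) (f g : P) : Prop :=
  rdvd (f ^+ a) g /\ ~ rdvd (f ^+ a.+1) g.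

Definition hatF (F : 'I_n -> P) (j : 'I_n) (h : K) : Prop :=
  exists a : 'I_n -> nat,
    a j = 0%N /\ (forall k, k != j -> maxpow (a k) (F k) (subst_exch F j k)) /\
    h = (F j)%:F / (\prod_(k < n) xv k ^+ a k)%:F.

(* x'_j = \hat F_j / x_j; under Condition 1.2 (i), \hat F_j = F_j. *)
Definition xprime (F : 'I_n -> P) (j : 'I_n) : K := (F j)%:F / xK j.

Definition lexlt (m1 m2 : 'X_{1..n}) : Prop :=
  exists i : 'I_n, (forall j : 'I_n, (j < i)%N -> m1 j = m2 j) /\ (m1 i < m2 i)%N.

Definition lexfirst (p : P) (m : 'X_{1..n}) : Prop :=
  m \in msupp p /\ forall m', m' \in msupp p -> m' != m -> lexlt m m'.

Definition deg1 (m : 'X_{1..n}) : nat := (\sum_(i < n | val i == 0%N) m i)%N.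

(* Condition 1.2; M_k is the monomial 'X_[mk k] (with coefficient 1),
   paper indices are shifted by one (paper's k is our k+1). *)
Definition condition12 (F : 'I_n -> P) : Prop :=
  (forall k, hatF F k (F k)%:F) /\
  exists mk : 'I_n -> 'X_{1..n},
    (forall k, lexfirst (F k) (mk k)) /\
    (forall k, (F k)@_(mk k) = 1 /\ forall i : 'I_n, (i <= k)%N -> mk k i = 0%N) /\
    (forall k : 'I_n, (1 <= k)%N -> (exists m, m \in msupp (F k) /\ (0 < deg1 m)%N) ->
       forall m, m \in msupp (F k - 'X_[mk k]) -> (0 < deg1 m)%N) /\
    (forall k : 'I_n, (2 <= k)%N -> (forall m, m \in msupp (F k) -> deg1 m = 0%N) ->
       forall i : 'I_n, (1 <= i < k)%N -> (0 < mk i k)%N ->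
       forall m, m \in msupp (F k - 'X_[mk k]) -> (0 < m i)%N).

Definition monoK (m : 'X_{1..n}) : K := ('X_[m])%:F.

Definition stmon (F : 'I_n -> P) (e f : 'X_{1..n}) : K :=
  \prod_(i < n) (xK i ^+ e i * xprime F i ^+ f i).

Definition stcond (e f : 'X_{1..n}) : Prop :=
  deg1 e = 0%N /\ deg1 f = 0%N /\ forall i, e i = 0%N \/ f i = 0%N.

Definition Rst (F : 'I_n -> P) (c : K) : Prop :=
  exists s : seq (R * 'X_{1..n} * 'X_{1..n}),
    (forall t, t \in s -> stcond t.1.2 t.2) /\
    c = \sum_(t <- s) (t.1.1%:MP)%:F * stmon F t.1.2 t.2.

Definition kill1 (p : P) : P :=
  p \mPo [tuple (if val i == 0%N then 0 else 'X_i) | i < n].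

(* phi c = d : writing c = p / x^m with no x_1 in the denominator,
   phi c = p|_{x_1=0} / x^m  (independent of the representation) *)
Definition phi_rel (c d : K) : Prop :=
  exists (p : P) (m : 'X_{1..n}), deg1 m = 0%N /\
    c = p%:F / monoK m /\ d = (kill1 p)%:F / monoK m.

(* LT y = L : writing y = p / x^m (p polynomial), L collects the terms of
   p with the smallest x_1-degree, divided by x^m (independent of the
   representation) *)
Definition LT_rel (y L : K) : Prop :=
  exists (p : P) (m : 'X_{1..n}) (d : nat),
    y = p%:F / monoK m /\
    (exists2 m', m' \in msupp p & deg1 m' = d) /\
    (forall m', m' \in msupp p -> (d <= deg1 m')%N) /\
    L = (\sum_(m' <- msupp p | deg1 m' == d) p@_m' *: 'X_[m'])%:F / monoK m.

End LP.

(* Main.v *)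
Require Import Defs.
From HB Require Import structures.
From mathcomp Require Import all_boot all_order all_algebra.
From mathcomp Require Import fraction.
From mathcomp.multinomials Require Import mpoly.
From mathcomp Require Import zify ring.
Import GRing.Theory.
Local Open Scope ring_scope.
Set Implicit Arguments.
Unset Strict Implicit.
Unset Printing Implicit Defensive.

Section Lex.
Variable n : nat.
Implicit Types m : 'X_{1..n}.

Definition lexb m1 m2 : bool :=
  [exists i : 'I_n, [forall j : 'I_n, (j < i)%N ==> (m1 j == m2 j)] && (m1 i < m2 i)%N].

Lemma lexbP m1 m2 : reflect (lexlt m1 m2) (lexb m1 m2).
Proof.
apply: (iffP existsP) => [[i /andP[/forallP H1 H2]]|[i [H1 H2]]].
  by exists i; split => // j Hj; apply/eqP; exact: (implyP (H1 j) Hj).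
by exists i; rewrite H2 andbT; apply/forallP => j; apply/implyP => Hj; rewrite H1.
Qed.

Lemma lexb_irr m : ~~ lexb m m.
Proof. by apply/existsP => -[i /andP[_]]; rewrite ltnn. Qed.

Lemma lexb_trans m2 m1 m3 : lexb m1 m2 -> lexb m2 m3 -> lexb m1 m3.
Proof.
move=> /existsP[i /andP[/forallP H1 H2]] /existsP[k /andP[/forallP K1 K2]].
apply/existsP; case: (ltngtP i k) => [ik|ki|/val_inj ik].
- exists i; apply/andP; split.
    apply/forallP => j; apply/implyP => ji.
    rewrite (eqP (implyP (H1 j) ji)); apply: (implyP (K1 j)); exact: ltn_trans ji ik.
  by rewrite -(eqP (implyP (K1 i) ik)).
- exists k; apply/andP; split.
    apply/forallP => j; apply/implyP => jk.
    rewrite (eqP (implyP (H1 j) (ltn_trans jk ki))); exact: (implyP (K1 j)).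
  by rewrite (eqP (implyP (H1 k) ki)).
- subst k; exists i; apply/andP; split; last exact: ltn_trans H2 K2.
  apply/forallP => j; apply/implyP => ji.
  by rewrite (eqP (implyP (H1 j) ji)) (eqP (implyP (K1 j) ji)).
Qed.

Lemma lexb_total m1 m2 : m1 != m2 -> lexb m1 m2 || lexb m2 m1.
Proof.
move=> ne.
have [i0 Hi0] : exists i, m1 i != m2 i.
  apply/existsP; apply: contraR ne; rewrite negb_exists => /forallP H.
  by apply/eqP/mnmP => i; move: (H i); rewrite negbK => /eqP.
case: (@arg_minnP _ i0 (fun i : 'I_n => m1 i != m2 i) val Hi0) => i Hi Hmin.
have Hb : forall j : 'I_n, (j < i)%N -> m1 j = m2 j.
  move=> j ji; apply/eqP; apply: contraTT ji => Hj; rewrite -leqNgt; exact: Hmin.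
case: (ltngtP (m1 i) (m2 i)) => [lt|gt|eq]; last by rewrite eq eqxx in Hi.
- apply/orP; left; apply/existsP; exists i; rewrite lt andbT.
  by apply/forallP => j; apply/implyP => ji; rewrite Hb.
- apply/orP; right; apply/existsP; exists i; rewrite gt andbT.
  by apply/forallP => j; apply/implyP => ji; rewrite Hb.
Qed.

Lemma lexb_addr m1 m2 k : lexb m1 m2 -> lexb (m1 + k)%MM (m2 + k)%MM.
Proof.
move=> /existsP[i /andP[/forallP H1 H2]]; apply/existsP; exists i.
rewrite !mnmDE ltn_add2r H2 andbT; apply/forallP => j; apply/implyP => ji.
by rewrite !mnmDE (eqP (implyP (H1 j) ji)).
Qed.

Lemma lexb_addl m1 m2 k : lexb m1 m2 -> lexb (k + m1)%MM (k + m2)%MM.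
Proof. by rewrite ![(k + _)%MM]addmC; exact: lexb_addr. Qed.

Definition lexle m1 m2 := (m1 == m2) || lexb m1 m2.

Lemma lex_add2 a b c d : lexle a b -> lexle c d -> (a != b) || (c != d) ->
  lexb (a + c)%MM (b + d)%MM.
Proof.
case/orP=> [/eqP<-|ab]; case/orP=> [/eqP<-|cd] //=.
- by rewrite !eqxx.
- by move=> _; exact: lexb_addl.
- by move=> _; exact: lexb_addr.
- move=> _; apply: (lexb_trans (lexb_addr c ab)); exact: lexb_addl.
Qed.

Lemma lexle_lt_trans a b c : lexle a b -> lexb b c -> lexb a c.
Proof. by case/orP=> [/eqP->//|ab bc]; exact: lexb_trans ab bc. Qed.

End Lex.


Section LF.
Variables (R : idomainType) (n : nat).
Local Notation P := {mpoly R[n]}.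

Definition LFc (p : P) (mu : 'X_{1..n}) := forall m, m \in msupp p -> lexle mu m.

Lemma mcoeff_sumE (I : Type) (r : seq I) (Pr : pred I) (F : I -> P) m :
  (\sum_(i <- r | Pr i) F i)@_m = \sum_(i <- r | Pr i) (F i)@_m.
Proof. exact: raddf_sum. Qed.

Lemma mcoeff_sumE0 (I : Type) (r : seq I) (F : I -> P) m :
  (\sum_(i <- r) F i)@_m = \sum_(i <- r) (F i)@_m.
Proof. exact: raddf_sum. Qed.

Lemma mcoeff_sum_msupp (p : P) mu : \sum_(m <- msupp p) p@_m * (m == mu)%:R = p@_mu.
Proof.
rewrite [in RHS](mpolyE p) mcoeff_sumE0; apply: eq_bigr => m _.
by rewrite /= mcoeffZ mcoeffX.
Qed.

Lemma LF_mul (p q : P) mu1 mu2 : LFc p mu1 -> LFc q mu2 ->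
  LFc (p * q) (mu1 + mu2) /\ (p * q)@_(mu1 + mu2) = p@_mu1 * q@_mu2.
Proof.
move=> Hp Hq; split.
  move=> m /msuppM_le /allpairsP [[m1 m2] /= [H1 H2 ->]].
  have L1 := Hp _ H1; have L2 := Hq _ H2.
  case E: ((mu1 != m1) || (mu2 != m2)).
    by apply/orP; right; exact: lex_add2.
  by move/negbT: E; rewrite negb_or !negbK => /andP[/eqP<- /eqP<-]; rewrite /lexle eqxx.
rewrite mpolyME mcoeff_sumE0 big_allpairs /=.
rewrite -(mcoeff_sum_msupp p) -(mcoeff_sum_msupp q) big_distrl /=.
rewrite big_seq [in RHS]big_seq; apply: eq_bigr => a Ha.
rewrite big_distrr /= big_seq [in RHS]big_seq; apply: eq_bigr => b Hb.
rewrite /= mcoeffZ mcoeffX.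
have -> : ((a + b)%MM == (mu1 + mu2)%MM) = (a == mu1) && (b == mu2).
  case E: ((mu1 != a) || (mu2 != b)).
    have := lex_add2 (Hp _ Ha) (Hq _ Hb) E.
    move=> L; have -> : (a == mu1) && (b == mu2) = false.
      by move: E; rewrite (eq_sym mu1) (eq_sym mu2); case: (a == mu1); case: (b == mu2).
    apply/negbTE; apply: contraTN L => /eqP ->; exact: lexb_irr.
  by move/negbT: E; rewrite negb_or !negbK => /andP[/eqP-> /eqP->]; rewrite !eqxx.
by rewrite -mulnb natrM mulrACA.
Qed.

Lemma LF_X m : LFc ('X_[m] : P) m /\ ('X_[m] : P)@_m = 1.
Proof.
split; last by rewrite mcoeffX eqxx.
by move=> m'; rewrite msuppX mem_seq1 => /eqP->; rewrite /lexle eqxx.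
Qed.

Lemma LF_1 : LFc (1 : P) 0%MM /\ (1 : P)@_0%MM = 1.
Proof. by rewrite -mpolyX0; exact: LF_X. Qed.

Lemma LF_prod (I : Type) (r : seq I) (g : I -> P) (mu : I -> 'X_{1..n}) :
  (forall i, LFc (g i) (mu i)) ->
  LFc (\prod_(i <- r) g i) (\sum_(i <- r) mu i)%MM /\
  (\prod_(i <- r) g i)@_(\sum_(i <- r) mu i)%MM = \prod_(i <- r) (g i)@_(mu i).
Proof.
move=> H; elim: r => [|x r [IH1 IH2]]; first by rewrite !big_nil; exact: LF_1.
rewrite !big_cons; have [A B] := LF_mul (H x) IH1.
by split => //; rewrite B IH2.
Qed.

Lemma LF_exp (g : P) mu k : LFc g mu ->
  LFc (g ^+ k) (mu *+ k)%MM /\ (g ^+ k)@_(mu *+ k)%MM = (g@_mu) ^+ k.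
Proof.
move=> H; elim: k => [|k [IH1 IH2]]; first by rewrite expr0 mulm0n; exact: LF_1.
rewrite exprS mulmS; have [A B] := LF_mul H IH1.
by split => //; rewrite B IH2 exprS.
Qed.

End LF.


Section Kill.
Variables (R : idomainType) (n : nat).
Hypothesis n0 : (0 < n)%N.
Local Notation P := {mpoly R[n]}.
Let i0 : 'I_n := Ordinal n0.

Lemma deg1E (m : 'X_{1..n}) : deg1 m = m i0.
Proof. by rewrite /deg1 (big_pred1 i0) // => i; rewrite /= -val_eqE. Qed.

Lemma deg1D (m1 m2 : 'X_{1..n}) : deg1 (m1 + m2)%MM = (deg1 m1 + deg1 m2)%N.
Proof. by rewrite !deg1E mnmDE. Qed.

Lemma kill1X (m : 'X_{1..n}) : kill1 ('X_[m] : P) = if deg1 m == 0%N then 'X_[m] else 0.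
Proof.
rewrite /kill1 comp_mpolyX deg1E.
case: eqP => H.
  rewrite [RHS]mpolyXE_id; apply: eq_bigr => i _; rewrite tnth_mktuple.
  case: eqP => // Hi; have -> : i = i0 by apply: val_inj.
  by rewrite H !expr0.
rewrite (bigD1 i0) //= tnth_mktuple /= expr0n.
by move/eqP/negbTE: H => ->; rewrite mul0r.
Qed.

Lemma kill1M (p q : P) : kill1 (p * q) = kill1 p * kill1 q.
Proof. by rewrite /kill1 rmorphM. Qed.

Lemma kill1D (p q : P) : kill1 (p + q) = kill1 p + kill1 q.
Proof. by rewrite /kill1 raddfD. Qed.

Lemma kill1Z c (p : P) : kill1 (c *: p) = c *: kill1 p.
Proof. by rewrite /kill1 comp_mpolyZ. Qed.

Lemma kill1_sum (I : Type) (r : seq I) (F : I -> P) :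
  kill1 (\sum_(i <- r) F i) = \sum_(i <- r) kill1 (F i).
Proof. by rewrite /kill1 raddf_sum. Qed.

Lemma kill1_prod (I : Type) (r : seq I) (F : I -> P) :
  kill1 (\prod_(i <- r) F i) = \prod_(i <- r) kill1 (F i).
Proof. by rewrite /kill1 rmorph_prod. Qed.

Lemma kill1Xn (p : P) k : kill1 (p ^+ k) = kill1 p ^+ k.
Proof. by rewrite /kill1 rmorphXn. Qed.

Lemma mcoeff_kill1 (p : P) mu : (kill1 p)@_mu = if deg1 mu == 0%N then p@_mu else 0.
Proof.
rewrite {1}(mpolyE p) kill1_sum mcoeff_sumE0.
rewrite -(mcoeff_sum_msupp p).
under eq_bigr => m _ do rewrite kill1Z /= mcoeffZ kill1X.
case: eqP => H.
  apply: eq_bigr => m _; case: (deg1 m =P 0%N) => Hm; first by rewrite mcoeffX.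
  rewrite mcoeff0 mulr0; case: (m =P mu) => [E|]; last by rewrite mulr0.
  by rewrite E H in Hm.
apply: big1 => m _; case: (deg1 m =P 0%N) => Hm; last by rewrite mcoeff0 mulr0.
by rewrite mcoeffX; case: (m =P mu) => [E|]; [rewrite -E Hm in H | rewrite mulr0].
Qed.

Lemma mcoeff_part (p : P) (Pr : pred 'X_{1..n}) mu :
  (\sum_(m <- msupp p | Pr m) p@_m *: 'X_[m])@_mu = if Pr mu then p@_mu else 0.
Proof.
rewrite (@mcoeff_sumE _ _ _ _ Pr).
under eq_bigr => m _ do rewrite /= mcoeffZ mcoeffX.
rewrite big_mkcond /= -(mcoeff_sum_msupp p).
case: (boolP (Pr mu)) => H.
  by apply: eq_bigr => m _; case: eqP => [->|]; rewrite ?H // mulr0; case: (Pr m).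
by apply: big1 => m _; case: eqP => [E|]; [rewrite E (negbTE H)| case: (Pr m); rewrite ?mulr0].
Qed.

Lemma mcoeffMX_ne0 (q : P) W mu : (q * 'X_[W])@_mu != 0 -> exists m', mu = (W + m')%MM.
Proof.
rewrite -mcoeff_msupp (perm_mem (msuppMX _ _)) => /mapP[m' _ ->]; by exists m'.
Qed.

Let W k : 'X_{1..n} := (U_(i0) *+ k)%MM.

Lemma W_i0 k : W k i0 = k.
Proof. by rewrite /W mulmnE mnm1E eqxx mul1n. Qed.

Lemma deg1W k : deg1 (W k) = k.
Proof. by rewrite deg1E W_i0. Qed.

Lemma low_ge (Q : P) k m : m \in msupp (Q * 'X_[W k]) -> (k <= deg1 m)%N.
Proof.
rewrite mcoeff_msupp => /mcoeffMX_ne0 [m' ->]; by rewrite deg1D deg1W leq_addr.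
Qed.

Lemma low_ex (Q : P) k : kill1 Q != 0 -> exists2 m, m \in msupp (Q * 'X_[W k]) & deg1 m = k.
Proof.
move=> H; have [nu Hnu] : exists nu, (kill1 Q)@_nu != 0.
  move: H; rewrite -msupp_eq0; case E: (msupp (kill1 Q)) => [|nu s] // _.
  by exists nu; rewrite -mcoeff_msupp E mem_head.
move: Hnu; rewrite mcoeff_kill1; case: (deg1 nu =P 0%N) => D Hnu; last by rewrite eqxx in Hnu.
exists (W k + nu)%MM; last by rewrite deg1D deg1W D addn0.
by rewrite mcoeff_msupp mcoeffMX.
Qed.

Lemma low_sum (Q : P) k :
  \sum_(m <- msupp (Q * 'X_[W k]) | deg1 m == k) (Q * 'X_[W k])@_m *: 'X_[m]
  = kill1 Q * 'X_[W k].
Proof.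
apply/mpolyP => mu; rewrite mcoeff_part.
case: (leqP k (mu i0)) => Hk.
  have Hle : (W k <= mu)%MM.
    apply/mnm_lepP => i; rewrite /W mulmnE mnm1E; case: eqP => [<-|]; by rewrite ?mul1n ?mul0n.
  rewrite -(submK Hle) addmC !mcoeffMX mcoeff_kill1 deg1D deg1W.
  by rewrite -[X in (_ == X)]addn0 eqn_add2l.
have -> : (deg1 mu == k) = false by rewrite deg1E; apply/negbTE; rewrite neq_ltn Hk.
apply/esym/eqP; apply: contraTT Hk => /mcoeffMX_ne0 [m' ->].
by rewrite -leqNgt mnmDE W_i0 leq_addr.
Qed.

End Kill.


Section KeyInd.
Variables (R : idomainType) (n : nat).
Local Notation P := {mpoly R[n]}.

Lemma lexle_anti (a b : 'X_{1..n}) : lexle a b -> lexle b a -> a = b.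
Proof.
case/orP=> [/eqP//|ab]; case/orP=> [/eqP//|ba].
by have := lexb_trans ab ba; rewrite (negbTE (lexb_irr _)).
Qed.

Lemma exists_lexmin (s : seq 'X_{1..n}) : s != [::] ->
  exists2 x, x \in s & forall y, y \in s -> lexle x y.
Proof.
elim: s => [//|a s IH] _; case: s IH => [|b s] IH.
  by exists a; rewrite ?mem_head // => y; rewrite mem_seq1 => /eqP->; rewrite /lexle eqxx.
have [x Hx Hmin] := IH isT.
case: (boolP (a == x)) => [/eqP ax|ax].
  exists a; first exact: mem_head.
  move=> y; rewrite in_cons => /orP[/eqP->|Hy]; first by rewrite /lexle eqxx.
  by rewrite ax; exact: Hmin.
case/orP: (lexb_total ax) => H.
  exists a; first exact: mem_head.
  move=> y; rewrite in_cons => /orP[/eqP->|Hy]; first by rewrite /lexle eqxx.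
  case/orP: (Hmin y Hy) => [/eqP<-|xy]; apply/orP; right => //; exact: lexb_trans H xy.
exists x; first by rewrite in_cons Hx orbT.
move=> y; rewrite in_cons => /orP[/eqP->|Hy]; last exact: Hmin.
by apply/orP; right.
Qed.

Lemma key_ind (T : eqType) (s : seq T) (w : T -> R) (u v : T -> P) (lm : T -> 'X_{1..n}) :
  (forall t, t \in s -> LFc (v t) (lm t) /\ (v t)@_(lm t) = 1) ->
  (forall t t', t \in s -> t' \in s -> lm t = lm t' -> u t = u t' /\ v t = v t') ->
  \sum_(t <- s) w t *: v t = 0 -> \sum_(t <- s) w t *: u t = 0.
Proof.
move=> H1 H2 Hv; have [N] := ubnP (size s); elim: N s H1 H2 Hv => // N IH s H1 H2 Hv Hs.
case: (altP (s =P [::])) => [->|sne]; first by rewrite big_nil.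
have [x /mapP[t0 Ht0 ->] Hmin] : exists2 x, x \in map lm s & forall y, y \in map lm s -> lexle x y.
  by apply: exists_lexmin; move: sne; apply: contra => /eqP; case: s {Hs H1 H2 Hv IH}.
pose Pr := fun t => lm t == lm t0.
have Hc : \sum_(t <- s | Pr t) w t = 0.
  have E := congr1 (mcoeff (lm t0)) Hv; rewrite mcoeff0 mcoeff_sumE0 in E.
  rewrite -[in RHS]E [RHS]big_seq [RHS](bigID Pr) /= [X in _ = _ + X]big1 ?addr0.
    rewrite big_seq_cond; apply: eq_bigr => t /andP[Ht /eqP Hp].
    by rewrite mcoeffZ -Hp (H1 t Ht).2 mulr1.
  move=> t /andP[Ht /negP Hp]; rewrite mcoeffZ.
  case: (boolP (lm t0 \in msupp (v t))) => Hm; last by rewrite (memN_msupp_eq0 Hm) mulr0.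
  have L1 := (H1 t Ht).1 _ Hm; have L2 := Hmin (lm t) (map_f lm Ht).
  by case: Hp; rewrite /Pr (lexle_anti L1 L2).
have E1 : \sum_(t <- s | Pr t) w t *: u t = 0.
  rewrite big_seq_cond (eq_bigr (fun t => w t *: u t0)) => [|t /andP[Ht /eqP Hp]]; last first.
    by rewrite (H2 t t0 Ht Ht0 Hp).1.
  by rewrite -scaler_suml -big_seq_cond Hc scale0r.
have E2 : \sum_(t <- s | Pr t) w t *: v t = 0.
  rewrite big_seq_cond (eq_bigr (fun t => w t *: v t0)) => [|t /andP[Ht /eqP Hp]]; last first.
    by rewrite (H2 t t0 Ht Ht0 Hp).2.
  by rewrite -scaler_suml -big_seq_cond Hc scale0r.
rewrite (bigID Pr) /= E1 add0r -big_filter; apply: IH.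
- by move=> t; rewrite mem_filter => /andP[_ Ht]; exact: H1.
- by move=> t t'; rewrite !mem_filter => /andP[_ Ht] /andP[_ Ht']; exact: H2.
- by rewrite big_filter; rewrite (bigID Pr) /= E2 add0r in Hv.
- rewrite size_filter.
  have C1 : (0 < count Pr s)%N by rewrite -has_count; apply/hasP; exists t0 => //; rewrite /Pr eqxx.
  have C2 := count_predC Pr s.
  have -> : count (fun t => ~~ Pr t) s = count (predC Pr) s by [].
  move: Hs; rewrite -C2 ltnS => Hs; apply: leq_trans Hs.
  by rewrite -{1}(add0n (count _ s)) ltn_add2r.
Qed.

End KeyInd.


Section Main.
Variables (R : idomainType) (n : nat) (F : 'I_n -> {mpoly R[n]}).
Hypothesis n0 : (0 < n)%N.
Local Notation P := {mpoly R[n]}.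
Variable mk : 'I_n -> 'X_{1..n}.
Hypothesis HLF : forall k, LFc (kill1 (F k)) (mk k) /\ (kill1 (F k))@_(mk k) = 1.
Hypothesis Htri : forall (k : 'I_n) (i : 'I_n), (i <= k)%N -> mk k i = 0%N.

Definition uT (N : 'X_{1..n}) (t : R * 'X_{1..n} * 'X_{1..n}) : P :=
  'X_[t.1.2] * \prod_(i < n) F i ^+ t.2 i * 'X_[N - t.2].
Definition vT N t := kill1 (uT N t).
Definition lmT N (t : R * 'X_{1..n} * 'X_{1..n}) : 'X_{1..n} :=
  (t.1.2 + (\sum_(i < n) (mk i *+ t.2 i)) + (N - t.2))%MM.

Lemma vT_E N t : stcond t.1.2 t.2 -> deg1 N = 0%N ->
  vT N t = 'X_[t.1.2] * \prod_(i < n) kill1 (F i) ^+ t.2 i * 'X_[N - t.2].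
Proof.
case=> He [Hf _] HN; rewrite /vT /uT !kill1M (@kill1X R n n0) He eqxx.
have HB : deg1 (N - t.2)%MM = 0%N by rewrite (deg1E n0) mnmBE -(deg1E n0) HN.
rewrite (@kill1X R n n0) HB eqxx; congr (_ * _ * _).
by rewrite /kill1 rmorph_prod; apply: eq_bigr => i _; rewrite rmorphXn.
Qed.

Lemma LF_vT N t : stcond t.1.2 t.2 -> deg1 N = 0%N ->
  LFc (vT N t) (lmT N t) /\ (vT N t)@_(lmT N t) = 1.
Proof.
move=> Hs HN; rewrite vT_E // /lmT.
have [A1 B1] := LF_X R t.1.2.
have [A2 B2] := LF_prod (index_enum 'I_n) (fun i => (LF_exp (t.2 i) (HLF i).1).1).
have [A3 B3] := LF_X R (N - t.2)%MM.
have [A4 B4] := LF_mul A1 A2.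
have [A5 B5] := LF_mul A4 A3.
split; first exact: A5.
rewrite B5 B4 B1 B3 B2 mul1r mulr1.
by apply: big1 => i _; rewrite (LF_exp (t.2 i) (HLF i).1).2 (HLF i).2 expr1n.
Qed.

Lemma lmT_inj N t t' : stcond t.1.2 t.2 -> stcond t'.1.2 t'.2 ->
  (t.2 <= N)%MM -> (t'.2 <= N)%MM -> lmT N t = lmT N t' ->
  t.1.2 = t'.1.2 /\ t.2 = t'.2.
Proof.
move=> [_ [_ Ht]] [_ [_ Ht']] /mnm_lepP Hf /mnm_lepP Hf' E.
suff H : forall j (i : 'I_n), (i < j)%N -> t.1.2 i = t'.1.2 i /\ t.2 i = t'.2 i.
  by split; apply/mnmP => i; have := H i.+1 i (ltnSn i); case.
elim=> [//|j IH] i Hij.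
case: (ltnP i j) => Hi; first exact: IH.
have eij : val i = j by apply/eqP; rewrite eqn_leq Hi -ltnS Hij.
have := congr1 (fun m : 'X_{1..n} => m i) E; rewrite /lmT !mnmDE !mnmBE !mnm_sumE.
set S := (\sum_(k < n) (mk k *+ t.2 k)%MM i)%N.
have -> : (\sum_(k < n) (mk k *+ t'.2 k)%MM i = S)%N.
  apply: eq_bigr => k _; rewrite !mulmnE.
  case: (ltnP k i) => Hk; first by rewrite (IH k _).2 // -eij.
  by rewrite Htri.
move: (Hf i) (Hf' i) (Ht i) (Ht' i) => a b [c|c] [d|d]; rewrite c d; lia.
Qed.

End Main.


Section Rep.
Variables (R : idomainType) (n : nat) (F : 'I_n -> {mpoly R[n]}).
Hypothesis n0 : (0 < n)%N.
Local Notation P := {mpoly R[n]}.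
Local Notation K := {fraction P}.

Lemma XF_neq0 (m : 'X_{1..n}) : (('X_[m] : P)%:F : K) != 0.
Proof.
rewrite tofrac_eq0; apply/eqP => H.
by have := @mcoeffX n R m m; rewrite H mcoeff0 eqxx => /esym/eqP; rewrite oner_eq0.
Qed.

Lemma stmonE e f : stmon F e f = ('X_[e] * \prod_(i < n) F i ^+ f i)%:F / ('X_[f] : P)%:F.
Proof.
rewrite /stmon /xprime /xK /xv.
under eq_bigr => i _ do rewrite expr_div_n -!rmorphXn mulrA -rmorphM.
rewrite prodf_div -!rmorph_prod big_split /= -mpolyXE_id.
by rewrite -mpolyXE_id.
Qed.

Definition Nof (s : seq (R * 'X_{1..n} * 'X_{1..n})) : 'X_{1..n} := (\sum_(t <- s) t.2)%MM.

Lemma le_Nof s t : t \in s -> (t.2 <= Nof s)%MM.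
Proof.
rewrite /Nof; elim: s => [//|x s IH]; rewrite in_cons big_cons => /orP[/eqP->|H].
  exact: lem_addr.
exact: lepm_trans (IH H) (lem_addl _ _).
Qed.

Lemma deg1_Nof s : (forall t, t \in s -> stcond t.1.2 t.2) -> deg1 (Nof s) = 0%N.
Proof.
move=> H; rewrite (deg1E n0) /Nof mnm_sumE big_seq big1 // => t Ht.
by have [_ [Hf _]] := H t Ht; rewrite -(deg1E n0).
Qed.

Lemma Rst_rep c : Rst F c -> exists s : seq (R * 'X_{1..n} * 'X_{1..n}),
  (forall t, t \in s -> stcond t.1.2 t.2) /\
  c = (\sum_(t <- s) t.1.1 *: uT F (Nof s) t)%:F / ('X_[Nof s] : P)%:F.
Proof.
case=> s [Hs ->]; exists s; split => //.
rewrite rmorph_sum mulr_suml big_seq [RHS]big_seq; apply: eq_bigr => t Ht.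
rewrite stmonE /uT -mul_mpolyC !rmorphM /=.
have EN : ('X_[Nof s] : P) = 'X_[Nof s - t.2] * 'X_[t.2] by rewrite -mpolyXD submK // le_Nof.
rewrite EN rmorphM /=.
have H1 := XF_neq0 (Nof s - t.2)%MM.
by rewrite invfM !mulrA mulfK.
Qed.

Variable mk : 'I_n -> 'X_{1..n}.
Hypothesis HLF : forall k, LFc (kill1 (F k)) (mk k) /\ (kill1 (F k))@_(mk k) = 1.
Hypothesis Htri : forall (k : 'I_n) (i : 'I_n), (i <= k)%N -> mk k i = 0%N.

Lemma phi_nonzero c : Rst F c -> c != 0 ->
  exists (p : P) (N : 'X_{1..n}), deg1 N = 0%N /\ c = p%:F / ('X_[N] : P)%:F /\ kill1 p != 0.
Proof.
move=> /Rst_rep [s [Hs Hc]] cne0.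
exists (\sum_(t <- s) t.1.1 *: uT F (Nof s) t), (Nof s); split; first exact: deg1_Nof.
split => //; apply/negP => /eqP H0.
move: cne0; rewrite Hc.
suff -> : \sum_(t <- s) t.1.1 *: uT F (Nof s) t = 0 by rewrite rmorph0 mul0r eqxx.
apply: (@key_ind R n _ s (fun t => t.1.1) (uT F (Nof s)) (vT F (Nof s)) (lmT mk (Nof s))).
- move=> t Ht; apply: (LF_vT n0 HLF); [exact: Hs | exact: deg1_Nof].
- move=> t t' Ht Ht' E.
  have [E1 E2] := lmT_inj n0 Htri (Hs t Ht) (Hs t' Ht') (le_Nof Ht) (le_Nof Ht') E.
  by rewrite /vT /uT E1 E2.
- move: H0; rewrite kill1_sum => H0; rewrite -[RHS]H0; apply: eq_bigr => t _; by rewrite kill1Z.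
Qed.

End Rep.

Lemma fh1 (K : fieldType) (a m w nn : K) : m != 0 -> nn != 0 -> a * m * w / (nn * m) = a / nn * w.
Proof. move=> H H2; field. by rewrite H H2. Qed.
Lemma fh2 (K : fieldType) (a m w nn : K) : m != 0 -> nn != 0 -> w != 0 ->
  a * m / (nn * m * w) = a / nn * w^-1.
Proof. move=> H H2 H3; field. by rewrite H H2 H3. Qed.
Lemma fh3 (K : fieldType) (x Q D : K) : D != 0 -> x * (Q / D) = Q * x / D.
Proof. move=> H; field. by rewrite H. Qed.
Lemma fh4 (K : fieldType) (x Q D : K) : x != 0 -> D != 0 -> x^-1 * (Q / D) = Q / (D * x).
Proof. move=> H H2; field. by rewrite H H2. Qed.

Section Final.
Variables (R : idomainType) (n : nat).
Hypothesis n0 : (0 < n)%N.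
Local Notation P := {mpoly R[n]}.
Local Notation K := {fraction P}.
Local Notation i0 := (Ordinal n0).
Local Notation W k := (U_(Ordinal n0) *+ k)%MM.

Lemma low_sum' (Q : P) k :
  \sum_(m <- msupp (Q * 'X_[W k]) | deg1 m == k) (Q * 'X_[W k])@_m *: 'X_[m]
  = kill1 Q * 'X_[W k].
Proof. exact: low_sum. Qed.

Lemma low_ex' (Q : P) k : kill1 Q != 0 -> exists2 m, m \in msupp (Q * 'X_[W k]) & deg1 m = k.
Proof. exact: low_ex. Qed.

Lemma low_ge' (Q : P) k m : m \in msupp (Q * 'X_[W k]) -> (k <= deg1 m)%N.
Proof. exact: low_ge. Qed.

Lemma XW k : ('X_i0 : P) ^+ k = 'X_[W k].
Proof. by rewrite mpolyXn. Qed.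

Definition L1rep (z : K) := exists (q : P) (M : 'X_{1..n}),
  deg1 M = 0%N /\ z = (q * 'X_i0)%:F / ('X_[M] : P)%:F.

Lemma L1rep0 : L1rep 0.
Proof. by exists 0, 0%MM; rewrite mul0r rmorph0 mul0r; split => //; rewrite (deg1E n0) mnm0E. Qed.

Lemma L1repD z1 z2 : L1rep z1 -> L1rep z2 -> L1rep (z1 + z2).
Proof.
move=> [q1 [M1 [H1 ->]]] [q2 [M2 [H2 ->]]].
exists (q1 * 'X_[M2] + q2 * 'X_[M1]), (M1 + M2)%MM; split; first by rewrite (deg1D n0) H1 H2.
rewrite addf_div ?XF_neq0 // -!rmorphM -rmorphD mpolyXD.
by rewrite mulrDl (mulrAC q1) (mulrAC q2).
Qed.

End Final.

Import Order.TTheory Num.Theory.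
Unset Implicit Arguments.

Theorem lemma4p19 (R : idomainType) (n : nat)
  (F : 'I_n -> {mpoly R[n]})
  (a b : int) (c : int -> {fraction {mpoly R[n]}}) :
  is_UFD R -> contains_Z R -> (2 <= n)%N ->
  LP_seed F -> condition12 F ->
  (a <= b)%R ->
  (forall m : int, (a <= m <= b)%R -> Rst F (c m)) ->
  c a != 0 ->
  let x1 : {fraction {mpoly R[n]}} := \prod_(i < n | val i == 0%N) xK R i in
  let y := \sum_(i < `|b - a|%N.+1) c (a + i%:Z) * x1 ^ (a + i%:Z) in
  exists d, phi_rel (c a) d /\ LT_rel y (d * x1 ^ a).
Proof.
move=> _ _ Hn _ H12 Hab Hc ca0 x1 y.
have n0 : (0 < n)%N by apply: leq_trans Hn.
case: H12 => _ [mk [Hlf [Hco _]]].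
have Htri : forall k i : 'I_n, (i <= k)%N -> mk k i = 0%N := fun k i H => (Hco k).2 i H.
have HLF : forall k, LFc (kill1 (F k)) (mk k) /\ (kill1 (F k))@_(mk k) = 1.
  move=> k; have D0 : deg1 (mk k) = 0%N by rewrite (deg1E n0) Htri.
  split; last by rewrite (mcoeff_kill1 n0) D0 eqxx (Hco k).1.
  move=> m; rewrite mcoeff_msupp (mcoeff_kill1 n0).
  case: (deg1 m =P 0%N) => _ Hm; last by rewrite eqxx in Hm.
  have Hm' : m \in msupp (F k) by rewrite mcoeff_msupp; exact: Hm.
  case: (altP (m =P mk k)) => [->|ne]; first by rewrite /lexle eqxx.
  case: (Hlf k) => _ H; by apply/orP; right; apply/lexbP; exact: H.
have [p [N [HN [Hca Hkp]]]] := phi_nonzero n0 HLF Htri (Hc a (introT andP (conj (lexx a) Hab))) ca0.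
exists ((kill1 p)%:F / monoK R N); split; first by rewrite /phi_rel; exists p; exists N.
have x1E : x1 = ('X_(Ordinal n0) : {mpoly R[n]})%:F.
  by rewrite /x1 (big_pred1 (Ordinal n0)) // => i; rewrite /= -val_eqE.
have x1ne0 : x1 != 0 by rewrite x1E; exact: (XF_neq0 R (U_((Ordinal n0)))%MM).
set K := `|b - a|%N.
have HK : (K%:Z = b - a)%R by rewrite /K abszE ger0_norm // subr_ge0.
set T := \sum_(i < K) c (a + (i.+1)%:Z) * x1 ^+ i.+1.
have Tl : L1rep n0 T.
  apply: (big_ind (L1rep n0)); [exact: L1rep0 | exact: L1repD |].
  move=> i _.
  have Hi : (a <= a + (i.+1)%:Z <= b)%R.
    have := ltn_ord i; rewrite -/K => Hi; apply/andP; split; lia.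
  have [s [Hs Hcs]] := Rst_rep (Hc _ Hi).
  exists ((\sum_(t <- s) t.1.1 *: uT F (Nof s) t) * 'X_(Ordinal n0) ^+ i), (Nof s); split.
    exact: deg1_Nof.
  by rewrite Hcs x1E -rmorphXn mulrAC -rmorphM exprSr mulrA.
have Ey : y = x1 ^ a * (c a + T).
  rewrite /y big_ord_recl /= addr0 mulrDr mulr_sumr; congr (_ + _); first exact: mulrC.
  apply: eq_bigr => i _; rewrite expfzDr // -exprnP mulrCA /bump /=.
  by rewrite add1n.
case: Tl => q [M [HM ET]].
set Q : {mpoly R[n]} := p * 'X_[M] + q * 'X_(Ordinal n0) * 'X_[N].
have EcT : c a + T = Q%:F / ('X_[N + M] : {mpoly R[n]})%:F.
  by rewrite Hca ET addf_div ?XF_neq0 // -!rmorphM -rmorphD mpolyXD.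
have kQ : kill1 Q = kill1 p * 'X_[M].
  rewrite /Q kill1D !kill1M !(kill1X R n0) HM eqxx.
  have D1 : deg1 (U_((Ordinal n0)))%MM = 1%N by rewrite (deg1E n0) mnm1E eqxx.
  by rewrite D1 /= mulr0 mul0r addr0.
have XMne0 : ('X_[M] : {mpoly R[n]}) != 0 by have := XF_neq0 R M; rewrite tofrac_eq0.
have kQne0 : kill1 Q != 0 by rewrite kQ mulf_neq0.
rewrite /monoK Ey EcT.
case Ea: a => [k|k].
- have xk : x1 ^ (Posz k) = ('X_[(U_(Ordinal n0) *+ k)%MM] : {mpoly R[n]})%:F by rewrite -exprnP x1E -rmorphXn XW.
  exists (Q * 'X_[(U_(Ordinal n0) *+ k)%MM]), (N + M)%MM, k; split.
    by rewrite xk fh3 ?XF_neq0 // rmorphM.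
  split; first exact: low_ex'.
  split; first by move=> m; exact: low_ge'.
  rewrite low_sum' kQ xk /monoK mpolyXD !rmorphM; symmetry; apply: fh1; exact: XF_neq0.
- have xk : x1 ^ (Negz k) = (('X_[(U_(Ordinal n0) *+ k.+1)%MM] : {mpoly R[n]})%:F)^-1.
    by rewrite NegzE -exprz_inv -exprnP exprVn x1E -rmorphXn XW.
  exists (Q * 'X_[(U_(Ordinal n0) *+ 0)%MM]), (N + M + (U_(Ordinal n0) *+ k.+1)%MM)%MM, 0%N; split.
    by rewrite xk fh4 ?XF_neq0 // mulm0n mpolyX0 mulr1 /monoK [in RHS]mpolyXD rmorphM.
  split; first exact: low_ex'.
  split; first by move=> m; exact: low_ge'.
  rewrite low_sum' kQ xk mulm0n mpolyX0 mulr1 /monoK !mpolyXD !rmorphM; symmetry.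
  apply: fh2; exact: XF_neq0.
Qed.
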